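(* Let $m\ge 1$ and $1\le t\le 2^{m-1}$ be integers and $p=t/2^m$. For $j=1,\dots,m$ let \[ a_j(t)=\min\big(t \bmod 2^{m-j+1},\;2^{m-j+1}-(t\bmod 2^{m-j+1})\big). \] Let $f:\{0,1\}^n\to\mathbb{R}$ and $g=\mathrm{Red}(f):\{0,1\}^{mn}\to\mathbb{R}$ as defined below. For $S\subseteq\{1,\dots,mn\}$ let $S_i=S\cap\{(i-1)m+1,\dots,im\}$, let $S'=\{i:|S_i|>0\}$, $k=|S'|$, and for $i\in S'$ let $s_i=\max(S_i)-(i-1)m$. Then \[ |\hat g(S)|=\Big(\prod_{i\in S'}\frac{a_{s_i}(t)}{t}\Big)\Big(\sqrt{\tfrac{p}{1-p}}\Big)^k|\hat f(S')|. \] Furthermore, if $s_i\le\lfloor\log(1/p)\rfloor$ for every $i\in S'$, then \[ \hat g(S)=\Big(-\sqrt{\tfrac{p}{1-p}}\Big)^k(-1)^{|S|}\hat f(S'). \] Here $\hat g$ is w.r.t. the uniform measure on $\{0,1\}^{mn}$ and $\hat f$ w.r.t. $\mu_p$.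
   Context: For $0<p<1$, $\mu_p$ denotes the product measure on $\{0,1\}^n$ with $\mu_p(x)=p^{\sum_i x_i}(1-p)^{n-\sum_i x_i}$; $\mu_{1/2}$ is the uniform measure. Elements of $\{0,1\}^n$ are identified with subsets of $\{1,\dots,n\}$. For $S,T\subseteq\{1,\dots,n\}$, $u_S(T)=\big(-\sqrt{(1-p)/p}\big)^{|S\cap T|}\big(\sqrt{p/(1-p)}\big)^{|S\setminus T|}$ (for $p=1/2$, $u_S(T)=(-1)^{|S\cap T|}$); these form an orthonormal basis of $L^2(\mu_p)$ and $\hat f(S)=\mathbb{E}_{\mu_p}[fu_S]$. Reduction: write $y\in\{0,1\}^{mn}$ as $(y^1,\dots,y^n)$, $y^i=(y^i_1,\dots,y^i_m)\in\{0,1\}^m$, where $y^i_j$ is coordinate $(i-1)m+j$ of $y$. Let $\mathrm{Bin}(y^i)=\sum_{j=0}^{m-1}2^jy^i_{m-j}$, $h(y^i)=1$ if $\mathrm{Bin}(y^i)\ge 2^m-t$ and $0$ otherwise, and $g=\mathrm{Red}(f)$, $g(y)=f(h(y^1),\dots,h(y^n))$. $\log$ is base 2. *)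

(* Defs.v *)
From HB Require Import structures.
From mathcomp Require Import all_boot all_order all_algebra.
From mathcomp Require Import reals exp.
Set Implicit Arguments. Unset Strict Implicit. Unset Printing Implicit Defensive.
Import Order.TTheory GRing.Theory Num.Theory.
Local Open Scope ring_scope.

Section Fourier.
Variables (R : realType) (I : finType).

(* mu_p(x) = p^{|x|} (1-p)^{N-|x|}, elements of {0,1}^N identified with subsets *)
Definition mu_p (p : R) (T : {set I}) : R :=
  p ^+ #|T| * (1 - p) ^+ (#|I| - #|T|).

Definition u_S (p : R) (S T : {set I}) : R :=
  (- Num.sqrt ((1 - p) / p)) ^+ #|S :&: T| * (Num.sqrt (p / (1 - p))) ^+ #|S :\: T|.

Definition fourier (p : R) (f : {set I} -> R) (S : {set I}) : R :=
  \sum_(T : {set I}) mu_p p T * f T * u_S p S T.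
End Fourier.

Local Open Scope nat_scope.

(* 0-based indexing: coordinate (i-1)m+j (1-based, i in 1..n, j in 1..m)
   is the ordinal i'*m + j' with i' = i-1, j' = j-1. *)
Definition bit (N : nat) (y : {set 'I_N}) (k : nat) : nat :=
  [exists x in y, val x == k].

(* Bin(y^i) = sum_{j=0}^{m-1} 2^j y^i_{m-j}; with 0-based jj = m-1-j,
   bit y^i_{jj+1} has weight 2^(m-1-jj). *)
Definition Bin (m n : nat) (y : {set 'I_(m * n)}) (i : 'I_n) : nat :=
  \sum_(jj < m) 2 ^ (m - 1 - jj) * bit y (i * m + jj).

Definition hred (m t n : nat) (y : {set 'I_(m * n)}) (i : 'I_n) : bool :=
  2 ^ m - t <= Bin y i.

Definition Red (R : Type) (m t n : nat) (f : {set 'I_n} -> R)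
  (y : {set 'I_(m * n)}) : R :=
  f [set i : 'I_n | hred t y i].

Definition a_coef (m t j : nat) : nat :=
  minn (t %% 2 ^ (m - j + 1)) (2 ^ (m - j + 1) - t %% 2 ^ (m - j + 1)).

Definition Sblock (m n : nat) (S : {set 'I_(m * n)}) (i : 'I_n) : {set 'I_(m * n)} :=
  [set x in S | i * m <= val x < i * m + m].

Definition Sprime (m n : nat) (S : {set 'I_(m * n)}) : {set 'I_n} :=
  [set i : 'I_n | 0 < #|Sblock S i|].

(* s_i = max(S_i) - (i-1)m, a value in 1..m *)
Definition s_idx (m n : nat) (S : {set 'I_(m * n)}) (i : 'I_n) : nat :=
  (\max_(x in Sblock S i) val x) - i * m + 1.
Arguments Red {R} m t {n} f y.
Arguments a_coef m t j.

(* Main.v *)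
Require Import Defs.
From HB Require Import structures.
From mathcomp Require Import all_boot all_order all_algebra.
From mathcomp Require Import reals exp.
From mathcomp Require Import zify ring.
Set Implicit Arguments. Unset Strict Implicit. Unset Printing Implicit Defensive.
Import Order.TTheory GRing.Theory Num.Theory.

Definition Bn (k : nat) (d : nat -> bool) : nat := \sum_(i < k) 2 ^ (k - 1 - i) * d i.

Lemma Bn_S k d : Bn k.+1 d = (Bn k d).*2 + d k.
Proof.
rewrite /Bn big_ord_recr /=.
have -> : k.+1 - 1 - k = 0 by lia.
rewrite expn0 mul1n -mul2n big_distrr /=.
congr (_ + _); apply: eq_bigr => i _.
rewrite mulnA -expnS; congr (2 ^ _ * _).
have := ltn_ord i; lia.
Qed.

Lemma Bn_lt k d : Bn k d < 2 ^ k.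
Proof.
elim: k => [|k IH]; first by rewrite /Bn big_ord0.
rewrite Bn_S expnS.
case: (d k) => /=; lia.
Qed.

Lemma Bn_digit k d j : j < k -> odd (Bn k d %/ 2 ^ (k - 1 - j)) = d j.
Proof.
elim: k => [|k IH] //= hj.
rewrite Bn_S.
case: (ltngtP j k) => hjk.
- have -> : k.+1 - 1 - j = (k - 1 - j).+1 by lia.
  rewrite expnS divnMA.
  have -> : ((Bn k d).*2 + d k) %/ 2 = Bn k d.
    rewrite -muln2 divnMDl // divn_small ?addn0 //; by case: (d k).
  exact: IH.
- lia.
- subst j.
  have -> : k.+1 - 1 - k = 0 by lia.
  rewrite expn0 divn1 oddD odd_double /=.
  by case: (d k).
Qed.


Section Num.
Variable R : realDomainType.
Local Open Scope ring_scope.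

Definition G (m : nat) (P : pred nat) (v : nat) : R :=
  \prod_(jj < m | P jj) (-1) ^+ odd (v %/ 2 ^ (m - 1 - jj)).

Variables (m s' : nat) (P : pred nat).
Hypotheses (hs : (s' < m)%N) (hPs : P s') (hP : forall jj, (jj < m)%N -> P jj -> (jj <= s')%N).

Let w := (2 ^ (m - 1 - s'))%N.
Let L := (2 ^ (m - s'))%N.
Lemma L2w : L = (w * 2)%N.
Proof. by rewrite /L /w -expnSr; congr (2 ^ _)%N; lia. Qed.

Lemma w_gt0 : (0 < w)%N. Proof. by rewrite expn_gt0. Qed.
Lemma L_gt0 : (0 < L)%N. Proof. by rewrite expn_gt0. Qed.

Lemma KL q r : (r < L)%N -> G m P (q * L + r) = G m P (q * L) * (if (w <= r)%N then -1 else 1).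
Proof.
move=> hr.
rewrite /G (bigD1 (Ordinal hs)) //= [in RHS](bigD1 (Ordinal hs)) //=.
have -> : \prod_(i < m | P i && (i != Ordinal hs)) (-1) ^+ odd ((q * L + r) %/ 2 ^ (m - 1 - i)) =
          \prod_(i < m | P i && (i != Ordinal hs)) ((-1) ^+ odd ((q * L) %/ 2 ^ (m - 1 - i)) : R).
  apply: eq_bigr => i /andP[Pi ni].
  have his : (i < s')%N.
    have := hP (ltn_ord i) Pi; rewrite leq_eqVlt => /orP[/eqP e|//].
    by exfalso; move: ni; rewrite -(inj_eq val_inj) /= e eqxx.
  have -> : (2 ^ (m - 1 - i) = L * 2 ^ (s' - 1 - i))%N.
    by rewrite /L -expnD; congr (2 ^ _)%N; lia.
  by rewrite !divnMA divnMDl ?L_gt0 // mulnK ?L_gt0 // (divn_small hr) addn0.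
have e0 : ((q * L) %/ w = q * 2)%N by rewrite L2w mulnA mulnAC mulnK ?w_gt0.
have e1 : ((q * L + r) %/ w = q * 2 + (w <= r))%N.
  rewrite L2w mulnA mulnAC divnMDl ?w_gt0 //; congr (_ + _)%N.
  move: hr; rewrite L2w => hr.
  case: (leqP w r) => h /=.
  - apply/eqP; rewrite eqn_leq; apply/andP; split.
    + by rewrite -ltnS ltn_divLR ?w_gt0 //; lia.
    + by rewrite leq_divRL ?w_gt0 // mul1n.
  - by rewrite divn_small.
rewrite -/w e0 e1 oddD oddM /= andbF /= mulrAC; congr (_ * _).
by case: (w <= r)%N; rewrite /= ?expr0 ?expr1 ?mul1r ?mulr1.
Qed.

Lemma G_norm v : `|G m P v| = 1.
Proof.
rewrite /G normr_prod big1 // => i _.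
by rewrite normrX normrN1 expr1n.
Qed.

Lemma sum_split (F : nat -> R) a b :
  \sum_(v < a + b) F v = \sum_(v < a) F v + \sum_(r < b) F (a + r)%N.
Proof. by rewrite big_split_ord. Qed.

Lemma sum_pm k : \sum_(r < k) (if (w <= r)%N then -1 else 1 : R) = (minn k w)%:R - (k - w)%:R.
Proof.
elim: k => [|k IH]; first by rewrite big_ord0 min0n sub0n subrr.
rewrite big_ord_recr /= IH.
case: (leqP w k) => h.
- have -> : minn k.+1 w = w by apply/minn_idPr; lia.
  have e : minn k w = w by apply/minn_idPr; lia.
  rewrite ?e.
  have -> : (k.+1 - w = (k - w).+1)%N by lia.
  by rewrite -addn1 natrD opprD addrA.
- have -> : minn k.+1 w = k.+1 by apply/minn_idPl; lia.
  have e : minn k w = k by apply/minn_idPl; lia.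
  rewrite ?e.
  have -> : (k.+1 - w = 0)%N by lia.
  have -> : (k - w = 0)%N by lia.
  by rewrite -[k.+1]addn1 natrD addrAC.
Qed.

Lemma full_zero b : \sum_(v < b * L) G m P v = 0.
Proof.
elim: b => [|b IH]; first by rewrite mul0n big_ord0.
rewrite mulSnr (sum_split (G m P)) IH add0r.
rewrite (eq_bigr (fun r : 'I_L => G m P (b * L) * (if (w <= r)%N then -1 else 1))); last first.
  by move=> r _; rewrite KL.
rewrite -big_distrr /= sum_pm L2w.
have -> : minn (w * 2) w = w by apply/minn_idPr; lia.
have -> : (w * 2 - w = w)%N by lia.
by rewrite subrr mulr0.
Qed.

Lemma total_zero : \sum_(v < 2 ^ m) G m P v = 0.
Proof.
have -> : (2 ^ m = 2 ^ s' * L)%N by rewrite /L -expnD; congr (2 ^ _)%N; lia.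
exact: full_zero.
Qed.

Lemma ind_sum (F : nat -> R) K N : (K <= N)%N ->
  \sum_(v < N) (if (K <= v)%N then F v else 0) = \sum_(r < N - K) F (K + r)%N.
Proof.
move=> hK; have h := sum_split (fun v => if (K <= v)%N then F v else 0) K (N - K).
rewrite (subnKC hK) in h; rewrite h big1 ?add0r; last first.
  by move=> v _; rewrite leqNgt ltn_ord.
by apply: eq_bigr => r _; rewrite leq_addr.
Qed.

Lemma ind_sum2 (F : nat -> R) K N : (K <= N)%N ->
  \sum_(v < N) (if (K <= v)%N then F v else 0) = \sum_(v < N) F v - \sum_(v < K) F v.
Proof.
move=> hK; have h := sum_split F K (N - K).
rewrite (subnKC hK) in h; rewrite ind_sum // h.
by rewrite addrAC subrr add0r.
Qed.


Lemma hmL : (2 ^ m = 2 ^ s' * L)%N.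
Proof. by rewrite /L -expnD; congr (2 ^ _)%N; lia. Qed.

Lemma N2 t : (t <= 2 ^ m)%N ->
  `|\sum_(v < 2 ^ m) (if (2 ^ m - t <= v)%N then G m P v else 0)| =
  (minn (t %% L) (L - t %% L))%:R.
Proof.
move=> htm.
rewrite ind_sum2 ?leq_subr // total_zero sub0r normrN.
have ht := divn_eq t L.
have r0L : (t %% L < L)%N by rewrite ltn_mod L_gt0.
move: ht r0L htm; rewrite hmL.
set B := (2 ^ s')%N; set a1 := (t %/ L)%N; set r0 := (t %% L)%N => ht r0L htm.
have Lp := L_gt0.
case: (posnP r0) => hr0.
- have -> : (B * L - t = (B - a1) * L)%N by rewrite mulnBl ht hr0 addn0.
  by rewrite full_zero normr0 hr0 min0n.
- have ha1 : (a1 < B)%N by rewrite -(ltn_pmul2r Lp); lia.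
  have hZ : ((B - a1 - 1) * L + a1 * L + L = B * L)%N.
    by rewrite -mulnDl -[X in (_ + X)%N]mul1n -mulnDl; congr (_ * _)%N; lia.
  have -> : (B * L - t = (B - a1 - 1) * L + (L - r0))%N by lia.
  rewrite (sum_split (G m P)) full_zero add0r.
  rewrite (eq_bigr (fun r : 'I_(L - r0) => G m P ((B - a1 - 1) * L) * (if (w <= r)%N then -1 else 1))); last first.
    move=> r _; rewrite KL //; have := ltn_ord r; lia.
  rewrite -big_distrr /= normrM G_norm mul1r sum_pm.
  have Lw := L2w.
  case: (leqP (L - r0) w) => h.
  + have -> : (L - r0 - w = 0)%N by lia.
    have -> : minn r0 (L - r0) = (L - r0)%N by apply/minn_idPr; lia.
    by rewrite subr0 normr_nat.
  + have -> : minn r0 (L - r0) = r0 by apply/minn_idPl; lia.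
    rewrite -natrB; last by lia.
    by rewrite normr_nat; congr (_ %:R); lia.
Qed.

Lemma N3 t : (t <= w)%N ->
  \sum_(v < 2 ^ m) (if (2 ^ m - t <= v)%N then G m P v else 0) =
  t%:R * \prod_(jj < m | P jj) (-1).
Proof.
move=> htw.
have wm : (w <= 2 ^ m)%N by rewrite /w leq_pexp2l //; lia.
rewrite ind_sum ?leq_subr // subKn; last by lia.
rewrite (eq_bigr (fun _ => \prod_(jj < m | P jj) (-1 : R))); last first.
  move=> r _; rewrite /G; apply: eq_bigr => jj Pjj.
  set d := (2 ^ (m - 1 - jj))%N.
  have hjj := hP (ltn_ord jj) Pjj.
  have wd : (w <= d)%N by rewrite /w /d leq_pexp2l //; lia.
  have dp : (0 < d)%N by rewrite expn_gt0.
  have E1 : (1 <= 2 ^ jj)%N by rewrite expn_gt0.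
  have md : (2 ^ m = 2 ^ jj * 2 * d)%N.
    by rewrite /d -expnSr -expnD; congr (2 ^ _)%N; have := ltn_ord jj; lia.
  have hq : ((2 ^ jj * 2 - 1) * d + d = 2 ^ m)%N.
    by rewrite md mulnBl mul1n subnK // leq_pmull //; lia.
  have -> : (2 ^ m - t + r = (2 ^ jj * 2 - 1) * d + (2 ^ m - t + r - (2 ^ jj * 2 - 1) * d))%N.
    have := ltn_ord r; lia.
  rewrite divnMDl // divn_small; last by have := ltn_ord r; lia.
  have -> : (2 ^ jj * 2 - 1 = (2 ^ jj - 1) * 2 + 1)%N by lia.
  by rewrite addn0 oddD oddM andbF.
by rewrite sumr_const card_ord mulr_natl.
Qed.

End Num.

Local Open Scope ring_scope.

Definition bb (N : nat) (y : {set 'I_N}) (k : nat) : bool := [exists x in y, val x == k].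

Lemma bb_mem N (y : {set 'I_N}) (x : 'I_N) : bb y x = (x \in y).
Proof.
apply/existsP/idP => [[z /andP[zy /eqP e]]|xy].
- by have -> : x = z by apply: val_inj.
- by exists x; rewrite xy eqxx.
Qed.

Lemma card_setT_fin (T : finType) : #|{set T}| = (2 ^ #|T|)%N.
Proof. by have := card_powerset [set: T]; rewrite powersetT !cardsT. Qed.

Section Main.
Variables (R : realType) (m t n : nat) (f : {set 'I_n} -> R) (S : {set 'I_(m * n)}).
Hypotheses (hm : (1 <= m)%N) (ht1 : (1 <= t)%N) (ht2 : (t <= 2 ^ (m - 1))%N).

Definition dig (y : {set 'I_(m * n)}) (i : nat) := fun jj => bb y (i * m + jj)%N.

Lemma Bin_Bn y (i : 'I_n) : Bin y i = Bn m (dig y i).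
Proof. by []. Qed.

Definition enc (y : {set 'I_(m * n)}) : {ffun 'I_n -> 'I_(2 ^ m)} :=
  [ffun i : 'I_n => Ordinal (Bn_lt m (dig y i))].

Lemma enc_inj : injective enc.
Proof.
move=> y y' e; apply/setP => x.
have hx : (x %/ m < n)%N by rewrite ltn_divLR; [have := ltn_ord x; lia | lia].
have e2 := congr1 (fun F : {ffun 'I_n -> 'I_(2 ^ m)} => val (F (Ordinal hx))) e; rewrite /= !ffunE /= in e2.
have hj : (x %% m < m)%N by rewrite ltn_mod; lia.
have := Bn_digit (dig y (Ordinal hx)) hj; rewrite e2 Bn_digit //= /dig /=.
by rewrite -divn_eq !bb_mem.
Qed.

Lemma enc_bij : bijective enc.
Proof.
apply: (inj_card_bij enc_inj).
by rewrite card_ffun card_setT_fin !card_ord -expnM mulnC.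
Qed.


Lemma prod_split (F : nat -> R) a b :
  \prod_(v < a + b) F v = \prod_(v < a) F v * \prod_(r < b) F (a + r)%N.
Proof. by rewrite big_split_ord. Qed.

Lemma prod_blocks (F : nat -> R) k :
  \prod_(x < m * k) F x = \prod_(i < k) \prod_(jj < m) F (i * m + jj)%N.
Proof.
elim: k => [|k IH]; first by rewrite muln0 !big_ord0.
have h := prod_split F (m * k) m; rewrite -mulnSr in h.
rewrite h IH big_ord_recr /=; congr (_ * _); apply: eq_bigr => jj _.
by rewrite mulnC.
Qed.

Definition K := (2 ^ m - t)%N.
Definition H (Y : {ffun 'I_n -> 'I_(2 ^ m)}) : {set 'I_n} := [set i | (K <= Y i)%N].

Lemma sign_blocks y :
  (-1) ^+ #|S :&: y| = \prod_(i : 'I_n) G R m (dig S i) (enc y i).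
Proof.
rewrite -prodr_const big_mkcond /=.
rewrite (eq_bigr (fun x : 'I_(m * n) => (fun k => if bb S k && bb y k then -1 else 1 : R) x)); last first.
  by move=> x _; rewrite !bb_mem inE.
rewrite (prod_blocks (fun k => if bb S k && bb y k then -1 else 1)); apply: eq_bigr => i _.
rewrite /G ffunE /= [RHS]big_mkcond /=; apply: eq_bigr => jj _.
rewrite Bn_digit // /dig.
by case: bb; case: bb.
Qed.

Lemma fourier_g : fourier (2%:R^-1) (Red m t f) S =
  \sum_(y : {set 'I_(m * n)}) (2%:R^-1) ^+ (m * n) *
     (f (H (enc y)) * \prod_(i : 'I_n) G R m (dig S i) (enc y i)).
Proof.
apply: eq_bigr => y _; rewrite /mu_p /u_S.
have h12 : 1 - 2%:R^-1 = 2%:R^-1 :> R by field.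
have h1 : (1 - 2%:R^-1) / 2%:R^-1 = 1 :> R by rewrite h12 divff // invr_eq0 pnatr_eq0.
have h1' : 2%:R^-1 / (1 - 2%:R^-1) = 1 :> R by rewrite h12 divff // invr_eq0 pnatr_eq0.
rewrite h1 h1' h12 !sqrtr1 expr1n mulr1 -exprD subnKC ?max_card // card_ord.
have -> : Red m t f y = f (H (enc y)).
  rewrite /Red; congr f; apply/setP => i; rewrite !inE ffunE /=.
  by [].
rewrite sign_blocks; ring.
Qed.


Definition D (i : 'I_n) (e : bool) : R :=
  \sum_(v : 'I_(2 ^ m)) (if (K <= v)%N == e then G R m (dig S i) v else 0).

Lemma regroup (c : R) :
  \sum_(y : {set 'I_(m * n)}) c * (f (H (enc y)) * \prod_(i : 'I_n) G R m (dig S i) (enc y i)) =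
  c * \sum_(x : {set 'I_n}) f x * \prod_(i : 'I_n) D i (i \in x).
Proof.
rewrite -big_distrr /=; congr (_ * _).
transitivity (\sum_(Y : {ffun 'I_n -> 'I_(2 ^ m)}) f (H Y) * \prod_(i : 'I_n) G R m (dig S i) (Y i)).
  by rewrite (reindex enc) //; exact: onW_bij enc_bij.
rewrite (eq_bigr (fun x => \sum_(Y : {ffun 'I_n -> 'I_(2 ^ m)}) f x *
   \prod_(i : 'I_n) (if (K <= Y i)%N == (i \in x) then G R m (dig S i) (Y i) else 0))); last first.
  by move=> x _; rewrite /D bigA_distr_bigA big_distrr.
rewrite exchange_big /=; apply: eq_bigr => Y _.
rewrite (bigD1 (H Y)) //= [X in _ + X]big1 ?addr0; last first.
  move=> x hx; case: (pickP (fun i => (K <= Y i)%N != (i \in x))) => [i hi|hno].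
  - by rewrite (bigD1 i) //= ifN // mul0r mulr0.
  - exfalso; move/negP: hx; apply; apply/eqP/setP => i; rewrite inE.
    by have := hno i => /= /negbFE /eqP.
congr (_ * _); apply: eq_bigr => i _; by rewrite inE eqxx.
Qed.


Lemma bb_ex N (y : {set 'I_N}) k : bb y k -> exists2 z : 'I_N, z \in y & val z = k.
Proof. by case/existsP => z /andP[zy /eqP e]; exists z. Qed.

Lemma block_out (i : 'I_n) : i \notin Sprime S -> forall jj, (jj < m)%N -> ~~ dig S i jj.
Proof.
move=> hi jj hjj; apply/negP => /bb_ex [z zS ez].
move: hi; rewrite inE => /negP; apply; apply/card_gt0P; exists z.
by rewrite inE zS ez /=; lia.
Qed.

Lemma block_in (i : 'I_n) : i \in Sprime S -> exists s',
  [/\ (s' < m)%N, dig S i s', (forall jj, (jj < m)%N -> dig S i jj -> (jj <= s')%N) & s_idx S i = s'.+1].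
Proof.
rewrite inE => hc.
have [x0 hx0 emax] := eq_bigmax_cond (fun x : 'I_(m * n) => val x) hc.
move: (hx0); rewrite inE => /andP[x0S /andP[h1 h2]].
exists (val x0 - i * m)%N; split.
- lia.
- by rewrite /dig subnKC // bb_mem.
- move=> jj hjj /bb_ex [z zS ez].
  have zb : z \in Sblock S i by rewrite inE zS ez /=; lia.
  have := @leq_bigmax_cond _ (fun x => x \in Sblock S i) (fun x : 'I_(m * n) => val x) z zb.
  rewrite emax ez => h; have := leq_sub2r (i * m) h; by rewrite addKn.
- by rewrite /s_idx emax addn1.
Qed.

Lemma G_out (i : 'I_n) v : i \notin Sprime S -> G R m (dig S i) v = 1.
Proof.
move=> hi; rewrite /G big_mkcond big1 // => jj _.
by rewrite (negbTE (block_out hi (ltn_ord jj))).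
Qed.

Lemma tm : (t < 2 ^ m)%N.
Proof.
have : (2 ^ (m - 1) < 2 ^ m)%N by rewrite ltn_exp2l //; lia.
lia.
Qed.

Lemma D_true i : D i true = \sum_(v < 2 ^ m) (if (K <= v)%N then G R m (dig S i) v else 0).
Proof. by apply: eq_bigr => v _; rewrite eqb_id. Qed.

Lemma D_sum i : D i false + D i true = \sum_(v < 2 ^ m) G R m (dig S i) v.
Proof.
rewrite -big_split /=; apply: eq_bigr => v _.
by case: (K <= v)%N; rewrite /= ?add0r ?addr0.
Qed.

Lemma D_out_true i : i \notin Sprime S -> D i true = t%:R.
Proof.
move=> hi; rewrite D_true (eq_bigr (fun v : 'I_(2 ^ m) => if (K <= v)%N then (fun _ => 1 : R) v else 0)); last first.
  by move=> v _; rewrite G_out.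
rewrite (ind_sum (fun _ => 1 : R)) /K ?leq_subr // sumr_const card_ord subKn ?(ltnW tm) //.
Qed.

Lemma D_out_false i : i \notin Sprime S -> D i false = (2 ^ m - t)%:R.
Proof.
move=> hi; have := D_sum i; rewrite D_out_true //.
rewrite (eq_bigr (fun _ => 1)); last by move=> v _; rewrite G_out.
rewrite sumr_const card_ord natrB ?(ltnW tm) // => e.
by apply/eqP; rewrite -(can_eq (addrK t%:R)) e subrK.
Qed.

Lemma D_in_false i : i \in Sprime S -> D i false = - D i true.
Proof.
move=> hi; have [s' [h1 h2 h3 _]] := block_in hi.
have := D_sum i; rewrite (total_zero R h1 h2 h3) => e.
by apply/eqP; rewrite -subr_eq0 opprK e.
Qed.


Definition pp : R := t%:R / (2 ^ m)%:R.
Definition sg : R := Num.sqrt (pp / (1 - pp)).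
Definition gam i : R := - D i true * sg / t%:R.

Lemma tm_gt0 : 0 < (2 ^ m)%:R :> R.
Proof. by rewrite ltr0n expn_gt0. Qed.
Lemma t_gt0 : 0 < t%:R :> R.
Proof. by rewrite ltr0n. Qed.
Lemma pp_gt0 : 0 < pp.
Proof. by rewrite divr_gt0 ?tm_gt0 ?t_gt0. Qed.
Lemma pp_lt1 : pp < 1.
Proof. by rewrite /pp ltr_pdivrMr ?tm_gt0 // mul1r ltr_nat tm. Qed.
Lemma q_gt0 : 0 < 1 - pp.
Proof. by rewrite subr_gt0 pp_lt1. Qed.
Lemma sg_gt0 : 0 < sg.
Proof. by rewrite sqrtr_gt0 divr_gt0 ?pp_gt0 ?q_gt0. Qed.
Lemma sgV : Num.sqrt ((1 - pp) / pp) = sg^-1.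
Proof. by rewrite -invf_div sqrtrV // ltW // divr_gt0 ?pp_gt0 ?q_gt0. Qed.
Lemma sg2 : sg * sg = pp / (1 - pp).
Proof. by rewrite -expr2 sqr_sqrtr // ltW // divr_gt0 ?pp_gt0 ?q_gt0. Qed.

Lemma prod_if (X : {set 'I_n}) (a : R) : \prod_(i : 'I_n) (if i \in X then a else 1) = a ^+ #|X|.
Proof. by rewrite -big_mkcond prodr_const. Qed.

Lemma mu_prod x : mu_p pp x = \prod_(i : 'I_n) ((if i \in x then pp else 1) * (if i \in ~: x then 1 - pp else 1)).
Proof.
rewrite big_split /= !prod_if /mu_p; congr (_ * _ ^+ _).
by rewrite -(cardsC x) addKn.
Qed.

Lemma u_prod x (T : {set 'I_n}) : u_S pp T x =
  \prod_(i : 'I_n) ((if i \in T :&: x then - sg^-1 else 1) * (if i \in T :\: x then sg else 1)).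
Proof. by rewrite big_split /= !prod_if /u_S sgV. Qed.

Lemma prod_cst (c : R) : c ^+ n = \prod_(i : 'I_n) c.
Proof. by rewrite prodr_const card_ord. Qed.

Lemma main_eq (x : {set 'I_n}) : (2%:R^-1) ^+ (m * n) * \prod_(i : 'I_n) D i (i \in x) =
  (\prod_(i in Sprime S) gam i) * (mu_p pp x * u_S pp (Sprime S) x).
Proof.
rewrite mu_prod u_prod -big_split /= exprM (prod_cst ((2%:R^-1) ^+ m)) -big_split /=.
rewrite [\prod_(i in Sprime S) _]big_mkcond -big_split /=; apply: eq_bigr => i _.
have tn0 : t%:R != 0 :> R by rewrite gt_eqF ?t_gt0.
have mn0 : (2 ^ m)%:R != 0 :> R by rewrite gt_eqF ?tm_gt0.
have sn0 : sg != 0 by rewrite gt_eqF ?sg_gt0.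
rewrite exprVn -natrX in_setI in_setD in_setC.
case hS: (i \in Sprime S); case hx: (i \in x) => /=.
- rewrite /gam /pp; field; by rewrite ?tn0 ?mn0 ?sn0.
- rewrite D_in_false //.
  transitivity (- D i true / t%:R * (1 - pp) * (sg * sg)); last by rewrite /gam; ring.
  rewrite sg2 /pp; field.
  by rewrite mn0 tn0 subr_eq0 eqr_nat gtn_eqF ?tm.
- by rewrite D_out_true ?hS // /pp mulrC !mulr1 mul1r.
- rewrite D_out_false ?hS // natrB ?(ltnW tm) // /pp !mulr1 !mul1r.
  field; by rewrite mn0.
Qed.


Lemma g_hat : fourier (2%:R^-1) (Red m t f) S = (\prod_(i in Sprime S) gam i) * fourier pp f (Sprime S).
Proof.
rewrite fourier_g regroup big_distrr /= /fourier big_distrr /=; apply: eq_bigr => x _.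
rewrite mulrCA main_eq; ring.
Qed.

Lemma norm_gam i : i \in Sprime S -> `|gam i| = (a_coef m t (s_idx S i))%:R / t%:R * sg.
Proof.
move=> hi; have [s' [h1 h2 h3 h4]] := block_in hi.
rewrite /gam !normrM normrN (gtr0_norm sg_gt0) normfV (gtr0_norm t_gt0).
rewrite D_true /K (N2 R h1 h2 h3 (ltnW tm)) h4 /a_coef.
have -> : (m - s'.+1 + 1 = m - s')%N by lia.
by rewrite mulrAC.
Qed.

Lemma t_le_w s' : (s' < m)%N ->
  (s'.+1)%:Z <= Num.floor (ln (pp^-1) / ln 2%:R) -> (t <= 2 ^ (m - 1 - s'))%N.
Proof.
move=> hs h.
set X := ln (pp^-1) / ln 2%:R.
have h1 : ((s'.+1 : int)%:~R : R) <= (Num.floor X)%:~R by rewrite ler_int.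
have h3 : (s'.+1)%:R <= X := le_trans h1 (floor_le X).
have l2 : 0 < ln (2%:R : R) by apply: ln_gt0; rewrite ltr1n.
rewrite /X ler_pdivlMr // mulr_natl -lnXn ?ltr0n // in h3.
rewrite ler_ln ?posrE ?exprn_gt0 ?ltr0n ?invr_gt0 ?pp_gt0 // in h3.
rewrite /pp invf_div ler_pdivlMr ?t_gt0 // -natrX -natrM ler_nat in h3.
have e : (2 ^ m = 2 ^ s'.+1 * 2 ^ (m - 1 - s'))%N by rewrite -expnD; congr (2 ^ _)%N; lia.
by rewrite -(@leq_pmul2l (2 ^ s'.+1)) ?expn_gt0 // -e.
Qed.

Definition eps (i : 'I_n) : R := \prod_(jj < m | dig S i jj) (-1).

Lemma gam_eps i : i \in Sprime S ->
  (s_idx S i)%:Z <= Num.floor (ln (pp^-1) / ln 2%:R) -> gam i = - sg * eps i.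
Proof.
move=> hi hf; have [s' [h1 h2 h3 h4]] := block_in hi.
rewrite h4 in hf; have hw := t_le_w h1 hf.
rewrite /gam D_true /K (N3 R h1 h2 h3 hw) /eps.
have tn0 : t%:R != 0 :> R by rewrite gt_eqF ?t_gt0.
by field.
Qed.

Lemma sign_S : (-1) ^+ #|S| = \prod_(i : 'I_n) eps i :> R.
Proof.
rewrite -prodr_const big_mkcond /=.
rewrite (eq_bigr (fun x : 'I_(m * n) => (fun k => if bb S k then -1 else 1 : R) x)); last first.
  by move=> x _; rewrite bb_mem.
rewrite (prod_blocks (fun k => if bb S k then -1 else 1)); apply: eq_bigr => i _.
by rewrite /eps [RHS]big_mkcond.
Qed.

Lemma eps_out i : i \notin Sprime S -> eps i = 1.
Proof.
move=> hi; rewrite /eps big_mkcond big1 // => jj _.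
by rewrite (negbTE (block_out hi (ltn_ord jj))).
Qed.

Lemma final :
  let p : R := t%:R / (2 ^ m)%:R in
  let k := #|Sprime S| in
  `|fourier (2%:R^-1) (Red m t f) S| =
    (\prod_(i in Sprime S) ((a_coef m t (s_idx S i))%:R / t%:R)) *
    (Num.sqrt (p / (1 - p))) ^+ k * `|fourier p f (Sprime S)|
  /\
  ((forall i, i \in Sprime S ->
      (s_idx S i)%:Z <= Num.floor (ln (p^-1) / ln 2%:R)) ->
   fourier (2%:R^-1) (Red m t f) S =
     (- Num.sqrt (p / (1 - p))) ^+ k * (-1) ^+ #|S| * fourier p f (Sprime S)).
Proof.
move=> p k; rewrite -/pp -/sg; split.
- rewrite g_hat normrM normr_prod.
  rewrite (eq_bigr (fun i => (a_coef m t (s_idx S i))%:R / t%:R * sg)); last first.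
    by move=> i hi; rewrite norm_gam.
  by rewrite big_split /= prodr_const.
- move=> hf; rewrite g_hat.
  rewrite (eq_bigr (fun i => - sg * eps i)); last first.
    by move=> i hi; rewrite gam_eps // hf.
  rewrite big_split /= prodr_const sign_S [in RHS](bigID (fun i => i \in Sprime S)) /=.
  rewrite [X in _ * (_ * X)]big1 ?mulr1 ?mulrA //.
  by move=> i hi; rewrite eps_out.
Qed.

End Main.

Unset Implicit Arguments.

Theorem proposition2p2 (R : realType) (m t n : nat) (f : {set 'I_n} -> R)
    (S : {set 'I_(m * n)}) :
  (1 <= m)%N -> (1 <= t <= 2 ^ (m - 1))%N ->
  let p : R := t%:R / (2 ^ m)%:R in
  let k := #|Sprime S| in
  `|fourier (2%:R^-1) (Red m t f) S| =
    (\prod_(i in Sprime S) ((a_coef m t (s_idx S i))%:R / t%:R)) *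
    (Num.sqrt (p / (1 - p))) ^+ k * `|fourier p f (Sprime S)|
  /\
  ((forall i, i \in Sprime S ->
      (s_idx S i)%:Z <= Num.floor (ln (p^-1) / ln 2%:R)) ->
   fourier (2%:R^-1) (Red m t f) S =
     (- Num.sqrt (p / (1 - p))) ^+ k * (-1) ^+ #|S| * fourier p f (Sprime S)).
Proof.
move=> hm /andP[h1 h2].
exact: (final f S hm h1 h2).
Qed.
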